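(* Consider the Hamiltonian control system described in the context satisfying (A1), (A2), and suppose (A5) holds with constant $\epsilon$. Then for all $x\in\mathcal{X}\setminus H_{\mathrm{tgt}}$, $$v_\epsilon(x)\le L_H C_f \quad\text{and}\quad T_\epsilon^\star(x)\ge \frac{\epsilon}{L_H C_f}.$$
   Context: System: $\dot x = f(x,u)=J(x)\nabla H(x)+G(x)u$, with state $x\in\mathcal{X}\subset\mathbb{R}^n$, $\mathcal{X}$ compact, $H:\mathbb{R}^n\to\mathbb{R}$, $J(x)$ skew-symmetric, input $u\in U\subset\mathbb{R}^m$, $U$ compact. Admissible control signals are piecewise continuous measurable maps into $U$; $\phi(t,x,u)$ denotes the state at time $t$ from $x$ under $u$. (A1) $H$ is $C^1$ on $\mathcal{X}$ and $\|\nabla H(x)\|\le L_H$ on $\mathcal{X}$. (A2) There is $L>0$ with $\|f(x_1,u)-f(x_2,u)\|\le L\|x_1-x_2\|$ for all $x_1,x_2\in\mathcal{X}$, $u\in U$. $C_f>0$ is a constant with $\|f(x,u)\|\le C_f$ for all $x\in\mathcal{X}$, $u\in U$. Target: $S_{\mathrm{tgt}}\subseteq\mathcal{X}$ compact and connected, $H(S_{\mathrm{tgt}})=[H_{\min},H_{\max}]$, $H_+^\star=(H_{\max}+H_{\min})/2$, $H_-^\star=(H_{\max}-H_{\min})/2$, $\Delta H(x):=|H(x)-H_+^\star|-H_-^\star$; $H_{\mathrm{tgt}}:=\{x\in\mathcal{X}:\Delta H(x)\le0\}$, and for $0<\epsilon<H_-^\star$, $H_{\mathrm{tgt}}^\epsilon:=\{x\in\mathcal{X}:\Delta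 H(x)\le-\epsilon\}$. $T_\epsilon(x,u):=\inf\{t>0:\phi(t,x,u)\in H_{\mathrm{tgt}}^\epsilon\}$, $T_\epsilon^\star(x):=\inf_u T_\epsilon(x,u)$, $v_\epsilon(x):=(\Delta H(x)+\epsilon)/T_\epsilon^\star(x)$. (A5) There exists $\epsilon>0$ with $\inf_{x\in\mathcal{X}\setminus H_{\mathrm{tgt}}^\epsilon}v_\epsilon(x)>0$. *)

(* Defs.v *)
From HB Require Import structures.
From mathcomp Require Import all_boot all_order all_algebra.
From mathcomp Require Import all_classical all_reals all_analysis.
Set Implicit Arguments. Unset Strict Implicit. Unset Printing Implicit Defensive.
Import Order.TTheory GRing.Theory Num.Theory.
Import numFieldNormedType.Exports.
Local Open Scope classical_set_scope.
Local Open Scope ring_scope.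

Definition enorm (R : realType) (k : nat) (v : 'cV[R]_k) : R :=
  Num.sqrt (\sum_(i < k) v i 0 ^+ 2).

Definition edot (R : realType) (k : nat) (v w : 'cV[R]_k) : R :=
  \sum_(i < k) v i 0 * w i 0.

(* Delta H(x) = |H(x) - H_+^*| - H_-^*. *)
Definition DeltaH (R : realType) (n : nat) (H : 'cV[R]_n -> R)
  (Hmin Hmax : R) (x : 'cV[R]_n) : R :=
  `|H x - (Hmax + Hmin) / 2| - (Hmax - Hmin) / 2.

Definition Htgt (R : realType) (n : nat) (X : set 'cV[R]_n)
  (H : 'cV[R]_n -> R) (Hmin Hmax : R) : set 'cV[R]_n :=
  [set x | X x /\ DeltaH H Hmin Hmax x <= 0].

Definition Htgt_eps (R : realType) (n : nat) (X : set 'cV[R]_n)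
  (H : 'cV[R]_n -> R) (Hmin Hmax eps : R) : set 'cV[R]_n :=
  [set x | X x /\ DeltaH H Hmin Hmax x <= - eps].

Definition piecewise_continuous (R : realType) (m : nat)
  (u : R -> 'cV[R]_m) : Prop :=
  forall T : R, exists s : seq R,
    forall t : R, 0 <= t <= T -> t \notin s -> {for t, continuous u}.

Definition admissible (R : realType) (m : nat) (U : set 'cV[R]_m)
  (u : R -> 'cV[R]_m) : Prop :=
  (forall t, U (u t)) /\
  (forall i : 'I_m, measurable_fun setT (fun t => u t i 0)) /\
  piecewise_continuous u.

(* phi is the flow: for every x in X and admissible u, t |-> phi t x u is a
   (Caratheodory) solution of xdot = f(x,u) with phi 0 x u = x, i.e.
   phi t x u = x + \int_0^t f(phi s x u, u s) ds for t >= 0. *)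
Definition is_flow (R : realType) (n m : nat)
  (f : 'cV[R]_n -> 'cV[R]_m -> 'cV[R]_n)
  (phi : R -> 'cV[R]_n -> (R -> 'cV[R]_m) -> 'cV[R]_n) (t : R)
  (x : 'cV[R]_n) (u : R -> 'cV[R]_m) : Prop :=
  forall i : 'I_n,
    (lebesgue_measure).-integrable `[0%R, t]
       (fun s => ((f (phi s x u) (u s)) i 0)%:E) /\
    phi t x u i 0 = x i 0 +
      Rintegral lebesgue_measure `[0%R, t] (fun s => (f (phi s x u) (u s)) i 0).

(* T_eps(x,u) = inf {t > 0 : phi(t,x,u) in H_tgt^eps}  (inf of empty = +oo) *)
Definition T_eps (R : realType) (n m : nat) (X : set 'cV[R]_n)
  (H : 'cV[R]_n -> R) (Hmin Hmax eps : R)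
  (phi : R -> 'cV[R]_n -> (R -> 'cV[R]_m) -> 'cV[R]_n)
  (x : 'cV[R]_n) (u : R -> 'cV[R]_m) : \bar R :=
  ereal_inf [set t%:E | t in [set t : R | 0 < t /\
                               Htgt_eps X H Hmin Hmax eps (phi t x u)]].

Definition Tstar_eps (R : realType) (n m : nat) (X : set 'cV[R]_n)
  (U : set 'cV[R]_m) (H : 'cV[R]_n -> R) (Hmin Hmax eps : R)
  (phi : R -> 'cV[R]_n -> (R -> 'cV[R]_m) -> 'cV[R]_n)
  (x : 'cV[R]_n) : \bar R :=
  ereal_inf [set T_eps X H Hmin Hmax eps phi x u | u in admissible U].

(* v_eps(x) = (Delta H(x) + eps) / T_eps^*(x)   (with 1/+oo = 0) *)
Definition v_eps (R : realType) (n m : nat) (X : set 'cV[R]_n)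
  (U : set 'cV[R]_m) (H : 'cV[R]_n -> R) (Hmin Hmax eps : R)
  (phi : R -> 'cV[R]_n -> (R -> 'cV[R]_m) -> 'cV[R]_n)
  (x : 'cV[R]_n) : \bar R :=
  ((DeltaH H Hmin Hmax x + eps)%:E *
     (Tstar_eps X U H Hmin Hmax eps phi x)^-1)%E.

(* Main.v *)
Require Import Defs.
From HB Require Import structures.
From mathcomp Require Import all_boot all_order all_algebra.
From mathcomp Require Import all_classical all_reals all_analysis.
From mathcomp Require Import ring lra measurable_realfun.
Import Order.TTheory GRing.Theory Num.Theory.
Import numFieldNormedType.Exports.
Local Open Scope classical_set_scope.
Local Open Scope ring_scope.
Lemma ltg_e (R : realType) (g : R -> R) (a b K e : R) :
  a <= b -> 0 < e ->
  (forall s, a <= s <= b -> exists2 eta, 0 < eta & forall s', a <= s' <= b ->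
     `|s' - s| < eta -> `|g s' - g s| <= (K + e) * `|s' - s|) ->
  `|g b - g a| <= (K + e) * (b - a).
Proof.
move=> ab e0 loc.
pose A := [set s | a <= s <= b /\ forall r, a <= r <= s -> `|g r - g a| <= (K + e) * (r - a)].
have Aa : A a.
  split; first by rewrite lexx ab.
  move=> r /andP[h1 h2]; have -> : r = a by apply/eqP; rewrite eq_le h1 h2.
  by rewrite !subrr normr0 mulr0.
have ubA : ubound A b by move=> s [/andP[_ ->]].
have hsA : has_sup A by split; [exists a | exists b].
set sig := sup A.
have asig : a <= sig by apply: sup_upper_bound.
have sigb : sig <= b by apply: ge_sup => //; exists a.
have [eta eta0 Heta] : exists2 eta, 0 < eta & forall s', a <= s' <= b ->
     `|s' - sig| < eta -> `|g s' - g sig| <= (K + e) * `|s' - sig|.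
  by apply: loc; rewrite asig sigb.
have Asig : A sig.
  split; first by rewrite asig sigb.
  move=> r /andP[ar rs].
  have [rlt|] := ltP r sig.
    have h0 : 0 < sig - r by rewrite subr_gt0.
    have [s [As1 As2] rs'] := sup_adherent h0 hsA.
    apply: As2; rewrite ar /=; apply: ltW; move: rs'; rewrite -/sig; lra.
  move=> srr; have -> : r = sig by apply/eqP; rewrite eq_le rs srr.
  have [s [As1 As2] rs'] := sup_adherent eta0 hsA.
  have ss : s <= sig by apply: sup_upper_bound.
  have /andP[as1 sb] := As1.
  have h1 := As2 s ltac:(by rewrite as1 lexx).
  have hd : `|s - sig| = sig - s by rewrite distrC ger0_norm // subr_ge0.
  have h2 := Heta s ltac:(by rewrite as1 sb).
  rewrite hd in h2; have h3 := h2 ltac:(by move: rs'; rewrite -/sig; lra).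
  rewrite (le_trans (ler_distD (g s) _ _)) //.
  rewrite distrC; move: h1 h3; nra.
have sigb' : sig = b.
  apply/eqP; rewrite eq_le sigb /=; rewrite leNgt; apply/negP => sigltb.
  pose s' := Num.min b (sig + eta / 2).
  have s'b : s' <= b by rewrite /s' ge_min lexx.
  have s'2 : s' <= sig + eta / 2 by rewrite /s' ge_min lexx orbT.
  have sigs' : sig < s' by rewrite /s' lt_min sigltb /= ltrDl divr_gt0.
  have As' : A s'.
    split; first by rewrite s'b andbT; apply: le_trans (ltW sigs').
    move=> r /andP[ar rs'].
    have [rsig|sigr] := leP r sig.
      by case: Asig => _; apply; rewrite ar rsig.
    have hd : `|r - sig| = r - sig by rewrite ger0_norm // subr_ge0 ltW.
    have h2 := Heta r ltac:(by rewrite ar (le_trans rs' s'b)).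
    rewrite hd in h2; have h3 := h2 ltac:(by move: rs' s'2 eta0; lra).
    have h1 : `|g sig - g a| <= (K + e) * (sig - a).
      by case: Asig => _; apply; rewrite asig lexx.
    rewrite (le_trans (ler_distD (g sig) _ _)) //.
    move: h1 h3; nra.
  have := sup_upper_bound hsA As'; rewrite -/sig; move: sigs'; lra.
case: Asig => _; rewrite sigb' => /(_ b); apply; by rewrite ab lexx.
Qed.

Lemma ltg (R : realType) (g : R -> R) (a b K : R) :
  a <= b ->
  (forall s, a <= s <= b -> forall e, 0 < e -> exists2 eta, 0 < eta & forall s', a <= s' <= b ->
     `|s' - s| < eta -> `|g s' - g s| <= (K + e) * `|s' - s|) ->
  `|g b - g a| <= K * (b - a).
Proof.
move=> ab loc; apply/ler_addgt0Pr => e e0.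
pose c := b - a + 1.
have c0 : 0 < c by rewrite /c; move: ab; lra.
pose e' := e / c.
have e'0 : 0 < e' by rewrite divr_gt0.
have e'c : e' * c = e by rewrite /e' mulfVK // gt_eqF.
have := @ltg_e R g a b K e' ab e'0 (fun s hs => loc s hs e' e'0).
move: e'c e'0; rewrite /c; nra.
Qed.

Lemma sumsq_ge0 (R : realType) k (v : 'cV[R]_k) : 0 <= \sum_(i < k) v i 0 ^+ 2.
Proof. by apply: sumr_ge0 => i _; exact: sqr_ge0. Qed.

Lemma enorm_ge0 (R : realType) k (v : 'cV[R]_k) : 0 <= enorm v.
Proof. exact: sqrtr_ge0. Qed.

Lemma coord_le_enorm (R : realType) k (v : 'cV[R]_k) i : `|v i 0| <= enorm v.
Proof.
rewrite /enorm -sqrtr_sqr ler_sqrt ?sumsq_ge0 //.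
rewrite (bigD1 i) //= lerDl; apply: sumr_ge0 => j _; exact: sqr_ge0.
Qed.

Lemma CS2 (R : realType) k (a b : 'cV[R]_k) :
  edot a b ^+ 2 <= (\sum_(i < k) a i 0 ^+ 2) * (\sum_(i < k) b i 0 ^+ 2).
Proof.
set A := \sum_(i < k) a i 0 ^+ 2; set B := \sum_(i < k) b i 0 ^+ 2.
set C := edot a b.
have key : forall t, 0 <= t ^+ 2 * A - 2 * t * C + B.
  move=> t.
  have -> : t ^+ 2 * A - 2 * t * C + B = \sum_(i < k) (t * a i 0 - b i 0) ^+ 2.
    rewrite (_ : \sum_(i < k) (t * a i 0 - b i 0) ^+ 2 = \sum_(i < k) (t ^+ 2 * a i 0 ^+ 2)
       + \sum_(i < k) (- (2 * t) * (a i 0 * b i 0)) + \sum_(i < k) b i 0 ^+ 2).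
      by rewrite /A /B /C /edot -!mulr_sumr; ring.
    by rewrite -!big_split /=; apply: eq_bigr => i _; ring.
  by apply: sumr_ge0 => i _; exact: sqr_ge0.
have A0 : 0 <= A by exact: sumsq_ge0.
have [Az|Ap] := eqVneq A 0.
  have az : forall i, a i 0 = 0.
    move=> i; apply/eqP; rewrite -sqrf_eq0 eq_le sqr_ge0 andbT -Az /A.
    rewrite (bigD1 i) //= lerDl; apply: sumr_ge0 => j _; exact: sqr_ge0.
  have -> : C = 0 by rewrite /C /edot big1 // => i _; rewrite az mul0r.
  by rewrite expr0n /= mulr_ge0 // sumsq_ge0.
have Apos : 0 < A by rewrite lt_def Ap A0.
have := key (C / A).
have e : (C / A) ^+ 2 * A - 2 * (C / A) * C + B = B - C ^+ 2 / A.
  by field; rewrite Ap.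
rewrite e subr_ge0 ler_pdivrMr // => h.
by rewrite mulrC.
Qed.

Lemma CS (R : realType) k (a b : 'cV[R]_k) : `|edot a b| <= enorm a * enorm b.
Proof.
rewrite /enorm -sqrtrM ?sumsq_ge0 // -sqrtr_sqr ler_sqrt ?mulr_ge0 ?sumsq_ge0 //.
exact: CS2.
Qed.

Section Ints.
Context {R : realType}.
Notation mu := (@lebesgue_measure R).

Lemma Rint_sum0 (I : Type) (r : seq I) (i0 : interval R) (a : I -> R) (F : I -> R -> R) :
  (forall i, mu.-integrable [set` i0] (EFin \o F i)) ->
  mu.-integrable [set` i0] (EFin \o (fun x => \sum_(i <- r) a i * F i x)) /\
  \int[mu]_(x in [set` i0]) (\sum_(i <- r) a i * F i x) = \sum_(i <- r) a i * \int[mu]_(x in [set` i0]) F i x.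
Proof.
move=> iF.
have mD : measurable ([set` i0] : set (g_sigma_algebraType (R.-ocitv.-measurable))) by exact: measurable_itv.
elim: r => [|i r [ih1 ih2]].
  split.
    apply: (eq_integrable _ (cst 0%E)); [exact: measurable_itv| |exact: integrable0]. move=> x _ /=; by rewrite big_nil.
  under eq_Rintegral do rewrite big_nil.
  rewrite big_nil Rintegral_cst ?mul0r //.
have iZ : mu.-integrable [set` i0] (EFin \o (fun x => a i * F i x)).
  apply: (eq_integrable mD _ _ _ (integrableZl mD (a i) (iF i))) => x _ /=; by rewrite EFinM.
split.
  apply: (eq_integrable mD _ _ _ (integrableD mD iZ ih1)) => x _ /=; by rewrite big_cons EFinD.
under eq_Rintegral do rewrite big_cons.
by rewrite RintegralD // RintegralZl // ih2 big_cons.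
Qed.

Lemma Rint_diff (F : R -> R) (s s' M : R) :
  0 <= s -> s <= s' ->
  mu.-integrable `[0, s'] (EFin \o F) ->
  (forall r, s < r <= s' -> `|F r| <= M) ->
  `|\int[mu]_(x in `[0, s']) F x - \int[mu]_(x in `[0, s]) F x| <= M * (s' - s).
Proof.
move=> s0 ss' iF bF.
rewrite Rintegral_itvB //.
have iF' : mu.-integrable `]s, s'] (EFin \o F).
  apply: integrableS iF => //; apply: subset_itvScc => //; rewrite bnd_simp //.
rewrite (le_trans (le_normr_Rintegral _ _)) //.
have -> : M * (s' - s) = \int[mu]_(x in `]s, s']) M.
  rewrite Rintegral_cst //; congr (M * _).
  have := @lebesgue_measure_itv R `]s, s']; rewrite /= lte_fin.
  move=> ->; case: ltP => h //=.
  have -> : s' = s by apply/eqP; rewrite eq_le h ss'.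
  by rewrite subrr.
apply: le_Rintegral => //.
  exact: integrable_norm.
  apply/integrableP; split; first exact/measurable_EFinP/measurable_cst.
  rewrite integral_cst //= lebesgue_measure_itv /=.
  by case: ifP => _; rewrite -?EFinD -?EFinM ?mule0 ltry.
Qed.
End Ints.

Lemma mxnorm_le (R : realType) k (v : 'cV[R]_k) c :
  0 <= c -> (forall i, `|v i 0| <= c) -> `|v| <= c.
Proof.
move=> c0 hv; change (mx_norm v <= c); rewrite mx_normrE.
elim/big_ind: _ => //.
  by move=> x y hx hy; rewrite ge_max hx hy.
by move=> [i j] _ /=; rewrite (ord1 j).
Qed.

Lemma diff_eps (R : realType) n (H : 'cV[R]_n -> R) y : differentiable H y ->
  forall e, 0 < e -> exists2 d, 0 < d & forall h, `|h| < d ->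
   `|H (y + h) - H y - 'd H y h| <= e * `|h|.
Proof.
move=> dH e e0.
have := diff_locally dH; move/eqaddoP => /(_ e e0) /nbhs_normP [d d0 Hd].
exists d => // h hd.
have := Hd h; rewrite /ball_ /= sub0r normrN => /(_ hd).
by rewrite !fctE /= [y + h]addrC opprD addrA.
Qed.


Lemma traj_bound (R : realType) n (H : 'cV[R]_n -> R) (gradH : 'cV[R]_n -> 'cV[R]_n)
  (p Fv : R -> 'cV[R]_n) (x : 'cV[R]_n) (L_H C_f : R) :
  0 < C_f ->
  (forall t, 0 <= t -> forall i : 'I_n,
     lebesgue_measure.-integrable `[0, t] (EFin \o (fun s => Fv s i 0)) /\
     p t i 0 = x i 0 + \int[lebesgue_measure]_(s in `[0, t]) Fv s i 0) ->
  (forall t, 0 <= t -> enorm (Fv t) <= C_f) ->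
  (forall t, 0 <= t -> differentiable H (p t) /\
     forall v, 'd H (p t) v = edot (gradH (p t)) v) ->
  (forall t, 0 <= t -> enorm (gradH (p t)) <= L_H) ->
  forall t, 0 <= t -> `|H (p t) - H x| <= L_H * C_f * t.
Proof.
move=> Cf0 hflow hF hdiff hgrad t t0.
have p0 : p 0 = x.
  apply/matrixP => i j; rewrite (ord1 j).
  have [_ ->] := hflow 0 (lexx 0) i.
  by rewrite set_itv1 Rintegral_set1 addr0.
have dp : forall s1 s2 i, 0 <= s1 -> 0 <= s2 -> p s2 i 0 - p s1 i 0 =
   \int[lebesgue_measure]_(s in `[0, s2]) Fv s i 0 - \int[lebesgue_measure]_(s in `[0, s1]) Fv s i 0.
  move=> s1 s2 i h1 h2.
  have [_ ->] := hflow s2 h2 i; have [_ ->] := hflow s1 h1 i.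
  by rewrite opprD addrACA subrr add0r.
have coord1 : forall s1 s2 i, 0 <= s1 -> s1 <= s2 ->
    `|p s2 i 0 - p s1 i 0| <= C_f * (s2 - s1).
  move=> s1 s2 i h1 h12; have h2 : 0 <= s2 by apply: le_trans h12.
  rewrite dp //; apply: Rint_diff => //; first by case: (hflow s2 h2 i).
  move=> r /andP[r1 _]; rewrite (le_trans (@coord_le_enorm R n (Fv r) i)) //.
  by apply: hF; apply: le_trans (ltW r1).
have coord : forall s1 s2 i, 0 <= s1 -> 0 <= s2 ->
    `|p s2 i 0 - p s1 i 0| <= C_f * `|s2 - s1|.
  move=> s1 s2 i h1 h2; have [h12|h21] := leP s1 s2.
    by rewrite (ger0_norm (_ : 0 <= s2 - s1)) ?subr_ge0 //; apply: coord1.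
  by rewrite distrC (distrC s2) (gtr0_norm (_ : 0 < s1 - s2)) ?subr_gt0 //; apply: coord1 => //; apply: ltW.
have inc1 : forall s1 s2 (a : 'cV[R]_n), 0 <= s1 -> s1 <= s2 ->
    `|\sum_(i < n) a i 0 * (p s2 i 0 - p s1 i 0)| <= enorm a * C_f * (s2 - s1).
  move=> s1 s2 a h1 h12; have h2 : 0 <= s2 by apply: le_trans h12.
  have [int2 eq2] := @Rint_sum0 R 'I_n (index_enum 'I_n) (Interval (BLeft 0) (BRight s2))
     (fun i => a i 0) (fun i r => Fv r i 0) (fun i => proj1 (hflow s2 h2 i)).
  have [int1 eq1] := @Rint_sum0 R 'I_n (index_enum 'I_n) (Interval (BLeft 0) (BRight s1))
     (fun i => a i 0) (fun i r => Fv r i 0) (fun i => proj1 (hflow s1 h1 i)).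
  rewrite (_ : \sum_(i < n) a i 0 * (p s2 i 0 - p s1 i 0) =
     \sum_(i < n) a i 0 * \int[lebesgue_measure]_(s in `[0, s2]) Fv s i 0 -
     \sum_(i < n) a i 0 * \int[lebesgue_measure]_(s in `[0, s1]) Fv s i 0); last first.
    by rewrite -sumrB; apply: eq_bigr => i _; rewrite dp // mulrBr.
  rewrite -eq2 -eq1; apply: Rint_diff => // r /andP[r1 _].
  have r0 : 0 <= r by apply: le_trans (ltW r1).
  apply: (le_trans (@CS R n a (Fv r))).
  by apply: ler_wpM2l; [exact: enorm_ge0 | exact: hF].
have inc : forall s1 s2 (a : 'cV[R]_n), 0 <= s1 -> 0 <= s2 ->
    `|\sum_(i < n) a i 0 * (p s2 i 0 - p s1 i 0)| <= enorm a * C_f * `|s2 - s1|.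
  move=> s1 s2 a h1 h2; have [h12|h21] := leP s1 s2.
    by rewrite (ger0_norm (_ : 0 <= s2 - s1)) ?subr_ge0 //; apply: inc1.
  rewrite (distrC s2) (gtr0_norm (_ : 0 < s1 - s2)) ?subr_gt0 //.
  rewrite (_ : \sum_(i < n) a i 0 * (p s2 i 0 - p s1 i 0) =
     - \sum_(i < n) a i 0 * (p s1 i 0 - p s2 i 0)); last first.
    by rewrite -sumrN; apply: eq_bigr => i _; rewrite -mulrN opprB.
  by rewrite normrN; apply: inc1 => //; apply: ltW.
have LH0 : 0 <= L_H by apply: le_trans (hgrad 0 (lexx 0)); exact: enorm_ge0.
suff : `|H (p t) - H (p 0)| <= L_H * C_f * (t - 0) by rewrite subr0 p0.
apply: (@ltg R (fun s => H (p s)) 0 t (L_H * C_f) t0) => s /andP[s0 st] e e0.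
have [dH dHe] := hdiff s s0.
have e10 : 0 < e / C_f by rewrite divr_gt0.
have [d d0 Hd] := @diff_eps R n H (p s) dH _ e10.
exists (d / C_f); first by rewrite divr_gt0.
move=> s' /andP[s'0 s't] hs'.
set h := p s' - p s.
have hle : `|h| <= C_f * `|s' - s|.
  apply: (@mxnorm_le R n); first by rewrite mulr_ge0 // ltW.
  by move=> i; rewrite /h !mxE; apply: coord.
have hd : `|h| < d.
  apply: le_lt_trans hle _; rewrite -ltr_pdivlMl //.
  by rewrite mulrC.
have -> : p s' = p s + h by rewrite /h addrC subrK.
have dlin : `|'d H (p s) h| <= L_H * C_f * `|s' - s|.
  rewrite dHe /edot.
  have := inc s s' (gradH (p s)) s0 s'0.
  rewrite (eq_bigr (fun i => gradH (p s) i 0 * h i 0)); last by move=> i _; rewrite /h !mxE.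
  move=> h1; apply: le_trans h1 _.
  rewrite -!mulrA; apply: ler_wpM2r; last exact: hgrad.
  by rewrite mulr_ge0 // ltW.
have rem := Hd h hd.
have r2 : e / C_f * `|h| <= e * `|s' - s|.
  apply: le_trans (ler_wpM2l (ltW e10) hle) _.
  by rewrite mulrA divfK ?gt_eqF.
rewrite -[H (p s + h) - H (p s)](subrK ('d H (p s) h)).
apply: le_trans (ler_normD _ _) _.
move: rem r2 dlin; lra.
Qed.

Theorem mainTheorem2 (R : realType) (n m : nat)
  (X : set 'cV[R]_n) (U : set 'cV[R]_m)
  (H : 'cV[R]_n -> R) (gradH : 'cV[R]_n -> 'cV[R]_n)
  (J : 'cV[R]_n -> 'M[R]_n) (G : 'cV[R]_n -> 'M[R]_(n, m))
  (phi : R -> 'cV[R]_n -> (R -> 'cV[R]_m) -> 'cV[R]_n)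
  (S_tgt : set 'cV[R]_n) (Hmin Hmax L_H C_f eps : R) :
  let f := fun (x : 'cV[R]_n) (u : 'cV[R]_m) => J x *m gradH x + G x *m u in
  compact X -> compact U ->
  (forall x, (J x)^T = - J x) ->
  (* phi is the flow of xdot = f(x,u), and trajectories stay in X *)
  (forall x u t, X x -> admissible U u -> 0 <= t ->
     is_flow f phi t x u /\ X (phi t x u)) ->
  (* (A1): H is C^1 on X with gradient gradH, and ||grad H|| <= L_H on X *)
  (forall x, X x -> differentiable H x /\
     forall v, 'd H x v = edot (gradH x) v) ->
  {within X, continuous gradH} ->
  (forall x, X x -> enorm (gradH x) <= L_H) ->
  (* (A2) *)
  (exists L : R, 0 < L /\ forall x1 x2 u, X x1 -> X x2 -> U u ->
     enorm (f x1 u - f x2 u) <= L * enorm (x1 - x2)) ->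
  (* C_f *)
  0 < C_f -> (forall x u, X x -> U u -> enorm (f x u) <= C_f) ->
  (* target set *)
  S_tgt `<=` X -> compact S_tgt -> connected S_tgt ->
  H @` S_tgt = `[Hmin, Hmax]%classic ->
  (* (A5) with constant eps, 0 < eps < H_-^* *)
  0 < eps -> eps < (Hmax - Hmin) / 2 ->
  (0 < ereal_inf [set v_eps X U H Hmin Hmax eps phi x
                  | x in X `\` Htgt_eps X H Hmin Hmax eps])%E ->
  forall x, X x -> ~ Htgt X H Hmin Hmax x ->
    (v_eps X U H Hmin Hmax eps phi x <= (L_H * C_f)%:E)%E /\
    ((eps / (L_H * C_f))%:E <= Tstar_eps X U H Hmin Hmax eps phi x)%E.
Proof.
move=> f cX cU Jskew hflow hA1 gcont hgrad hA2 Cf0 hCf Ssub cS connS HS eps0 epsH hA5 x Xx nHt.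
set K := L_H * C_f.
have dpos : 0 < DeltaH H Hmin Hmax x.
  by rewrite ltNge; apply/negP => hle; apply: nHt.
have LH0 : 0 <= L_H by apply: le_trans (hgrad x Xx); exact: enorm_ge0.
have K0 : 0 <= K by rewrite mulr_ge0 // ltW.
have claim : forall u, admissible U u -> forall t, 0 < t ->
    Htgt_eps X H Hmin Hmax eps (phi t x u) -> DeltaH H Hmin Hmax x + eps <= K * t.
  move=> u au t t0 [_ ht].
  have hb := @traj_bound R n H gradH (fun s => phi s x u) (fun s => f (phi s x u) (u s)) x L_H C_f Cf0
    (fun t t0 i => proj1 (hflow x u t Xx au t0) i)
    (fun t t0 => hCf _ _ (proj2 (hflow x u t Xx au t0)) (proj1 au t))
    (fun t t0 => hA1 _ (proj2 (hflow x u t Xx au t0)))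
    (fun t t0 => hgrad _ (proj2 (hflow x u t Xx au t0))) t (ltW t0).
  move: ht; rewrite /DeltaH => ht.
  have h1 := ler_distD (H (phi t x u)) (H x) ((Hmax + Hmin) / 2).
  rewrite (distrC (H x) (H (phi t x u))) (distrC _ (H x)) in h1.
  rewrite distrC in hb; move: hb h1 ht; rewrite -/K; lra.
set d := DeltaH H Hmin Hmax x.
set Ts := Tstar_eps X U H Hmin Hmax eps phi x.
have vE : v_eps X U H Hmin Hmax eps phi x = ((d + eps)%:E * Ts^-1)%E by [].
rewrite vE; clear vE.
have [Kz|Kp] := eqVneq K 0.
  have hT : (+oo <= Ts)%E.
    rewrite /Ts /Tstar_eps; apply: le_ereal_inf_tmp => _ [u au <-].
    rewrite /T_eps; apply: le_ereal_inf_tmp => _ [t [t0 ht] <-].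
    exfalso; have := claim u au t t0 ht; rewrite Kz mul0r; move: dpos eps0; rewrite -/d; lra.
  move: hT; rewrite leye_eq => /eqP ->.
  by rewrite invey mule0 Kz invr0 mulr0 leey lee_fin lexx.
have Kpos : 0 < K by rewrite lt_def Kp K0.
set tau := (d + eps) / K.
have hT : (tau%:E <= Ts)%E.
  rewrite /Ts /Tstar_eps; apply: le_ereal_inf_tmp => _ [u au <-].
  rewrite /T_eps; apply: le_ereal_inf_tmp => _ [t [t0 ht] <-].
  rewrite lee_fin /tau ler_pdivrMr // mulrC; exact: (claim u au t t0 ht).
have taupos : 0 < tau by rewrite divr_gt0 // addr_gt0.
split; last first.
  apply: le_trans hT; rewrite lee_fin /tau ler_pM2r ?invr_gt0 //.
  by rewrite lerDr ltW.
move: hT; case: Ts => [r| |] /=.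
- rewrite lee_fin => taur.
  have rpos : 0 < r by apply: lt_le_trans taur.
  rewrite inver gt_eqF // -EFinM lee_fin ler_pdivrMr //.
  by move: taur; rewrite /tau ler_pdivrMr // mulrC.
- by rewrite invey mule0 lee_fin.
- by rewrite leeNy_eq.
Qed.
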